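(* Let $\alpha\in\mathbb{R}\setminus\mathbb{Q}$ and $\tilde v\in C^0(\mathbb{T},\mathbb{C})$, and let $S^{\tilde v}(x)=\begin{pmatrix}\tilde v(x)&-1\\1&0\end{pmatrix}$. Assume that $|\operatorname{Re}\tilde v(x)|\le l$ and $\epsilon\le\operatorname{Im}\tilde v(x)\le l$ for all $x\in\mathbb{T}$, where $l\ge \epsilon>0$. Then $L(\alpha,S^{\tilde v})\ge C(l)\,\epsilon$, where $C(l)>0$ is a constant depending only on $l$.
   Context: $\mathbb{T}=\mathbb{R}/\mathbb{Z}$. For a continuous $A:\mathbb{T}\to SL(2,\mathbb{C})$ the Lyapunov exponent of the quasiperiodic cocycle $(\alpha,A)$ is $L(\alpha,A)=\lim_{n\to\infty}\frac1n\int_{\mathbb T}\ln\|A(x+(n-1)\alpha)\cdots A(x)\|\,dx$. *)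

(* Defs.v *)
From Stdlib Require Import Reals.
From Coquelicot Require Import Coquelicot.
Open Scope R_scope.

Record M2 := mkM2 { m11 : C; m12 : C; m21 : C; m22 : C }.

Definition M2mul (A B : M2) : M2 :=
  mkM2 (Cplus (Cmult (m11 A) (m11 B)) (Cmult (m12 A) (m21 B)))
       (Cplus (Cmult (m11 A) (m12 B)) (Cmult (m12 A) (m22 B)))
       (Cplus (Cmult (m21 A) (m11 B)) (Cmult (m22 A) (m21 B)))
       (Cplus (Cmult (m21 A) (m12 B)) (Cmult (m22 A) (m22 B))).

Definition M2id : M2 := mkM2 (RtoC 1) (RtoC 0) (RtoC 0) (RtoC 1).

Definition M2app (A : M2) (v : C * C) : C * C :=
  (Cplus (Cmult (m11 A) (fst v)) (Cmult (m12 A) (snd v)),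
   Cplus (Cmult (m21 A) (fst v)) (Cmult (m22 A) (snd v))).

Definition vnorm (v : C * C) : R :=
  sqrt (Cmod (fst v) ^ 2 + Cmod (snd v) ^ 2).

Definition opnorm (A : M2) : R :=
  real (Lub_Rbar (fun r => exists v, vnorm v = 1 /\ r = vnorm (M2app A v))).

Fixpoint cocycle (alpha : R) (A : R -> M2) (n : nat) (x : R) : M2 :=
  match n with
  | O => M2id
  | S k => M2mul (A (x + INR k * alpha)) (cocycle alpha A k x)
  end.

(* Lyapunov exponent: lim_{n->oo} (1/n) ∫_T ln ||A_n(x)|| dx, with T = [0,1]
   (functions on T = R/Z are represented as 1-periodic functions on R). *)
Definition lyapunov (alpha : R) (A : R -> M2) : Rbar :=
  Lim_seq (fun n => / INR (S n) *
    RInt (fun x => ln (opnorm (cocycle alpha A (S n) x))) 0 1).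

Definition Smat (v : R -> C) (x : R) : M2 :=
  mkM2 (v x) (RtoC (-1)) (RtoC 1) (RtoC 0).

Definition irrational (a : R) : Prop :=
  ~ exists p q : Z, q <> 0%Z /\ a = IZR p / IZR q.

(* Main.v *)
Require Import Defs.
From Stdlib Require Import Reals Lra Lia.
From Coquelicot Require Import Coquelicot.
Open Scope R_scope.


Ltac sq := repeat apply Rplus_le_le_0_compat; apply Rle_0_sqr.

Definition c2 (z : C) : R := fst z * fst z + snd z * snd z.
Definition vn2 (v : C * C) : R := c2 (fst v) + c2 (snd v).
Definition fr2 (A : M2) : R := c2 (m11 A) + c2 (m12 A) + c2 (m21 A) + c2 (m22 A).
Definition M2sub (A B : M2) : M2 :=
  mkM2 (Cminus (m11 A) (m11 B)) (Cminus (m12 A) (m12 B))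
       (Cminus (m21 A) (m21 B)) (Cminus (m22 A) (m22 B)).

Lemma c2_ge0 z : 0 <= c2 z.
Proof. unfold c2; nra. Qed.

Lemma vn2_ge0 v : 0 <= vn2 v.
Proof. unfold vn2; pose proof (c2_ge0 (fst v)); pose proof (c2_ge0 (snd v)); lra. Qed.

Lemma Cmod_sq z : Cmod z ^ 2 = c2 z.
Proof. unfold Cmod, c2. rewrite pow2_sqrt. ring. pose proof (pow2_ge_0 (fst z)); pose proof (pow2_ge_0 (snd z)); lra. Qed.

Lemma vnorm_vn2 v : vnorm v = sqrt (vn2 v).
Proof. unfold vnorm, vn2. rewrite !Cmod_sq. reflexivity. Qed.

Lemma c2_mult a b : c2 (Cmult a b) = c2 a * c2 b.
Proof. destruct a as [a1 a2], b as [b1 b2]; unfold c2; simpl; ring. Qed.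

Lemma c2_plus_le x y : c2 (Cplus x y) <= 2 * c2 x + 2 * c2 y.
Proof. destruct x as [a1 a2], y as [b1 b2]; unfold c2; simpl; pose proof (pow2_ge_0 (a1-b1)); pose proof (pow2_ge_0 (a2-b2)); nra. Qed.

Lemma app_bound A v : vn2 v = 1 -> vn2 (M2app A v) <= 2 * fr2 A.
Proof.
  intro H. unfold vn2 in *; unfold fr2, M2app; simpl.
  pose proof (c2_plus_le (Cmult (m11 A) (fst v)) (Cmult (m12 A) (snd v))).
  pose proof (c2_plus_le (Cmult (m21 A) (fst v)) (Cmult (m22 A) (snd v))).
  rewrite !c2_mult in *.
  pose proof (c2_ge0 (fst v)); pose proof (c2_ge0 (snd v)).
  pose proof (c2_ge0 (m11 A)); pose proof (c2_ge0 (m12 A));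
  pose proof (c2_ge0 (m21 A)); pose proof (c2_ge0 (m22 A)).
  nra.
Qed.

Lemma CS4 x1 x2 x3 x4 y1 y2 y3 y4 :
  x1*y1+x2*y2+x3*y3+x4*y4 <=
  sqrt (x1*x1+x2*x2+x3*x3+x4*x4) * sqrt (y1*y1+y2*y2+y3*y3+y4*y4).
Proof.
  rewrite <- sqrt_mult by sq.
  set (s := x1*y1+x2*y2+x3*y3+x4*y4).
  apply Rle_trans with (Rabs s); [apply Rle_abs|].
  rewrite <- sqrt_Rsqr_abs. apply sqrt_le_1_alt. unfold Rsqr, s.
  assert (0 <= (x1*y2-x2*y1)*(x1*y2-x2*y1) + (x1*y3-x3*y1)*(x1*y3-x3*y1) + (x1*y4-x4*y1)*(x1*y4-x4*y1)
      + (x2*y3-x3*y2)*(x2*y3-x3*y2) + (x2*y4-x4*y2)*(x2*y4-x4*y2) + (x3*y4-x4*y3)*(x3*y4-x4*y3)) by sq.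
  match goal with H : 0 <= ?E |- ?L <= ?R => replace R with (L + E) by ring end. lra.
Qed.

Lemma tri4 x1 x2 x3 x4 y1 y2 y3 y4 :
  sqrt ((x1+y1)*(x1+y1)+(x2+y2)*(x2+y2)+(x3+y3)*(x3+y3)+(x4+y4)*(x4+y4)) <=
  sqrt (x1*x1+x2*x2+x3*x3+x4*x4) + sqrt (y1*y1+y2*y2+y3*y3+y4*y4).
Proof.
  pose proof (CS4 x1 x2 x3 x4 y1 y2 y3 y4).
  set (a := sqrt (x1*x1+x2*x2+x3*x3+x4*x4)) in *.
  set (b := sqrt (y1*y1+y2*y2+y3*y3+y4*y4)) in *.
  assert (Ha : a * a = x1*x1+x2*x2+x3*x3+x4*x4) by (apply sqrt_sqrt; sq).
  assert (Hb : b * b = y1*y1+y2*y2+y3*y3+y4*y4) by (apply sqrt_sqrt; sq).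
  assert (0 <= a) by apply sqrt_pos. assert (0 <= b) by apply sqrt_pos.
  rewrite <- (sqrt_square (a+b)) by lra.
  apply sqrt_le_1_alt. nra.
Qed.

Definition vadd (u w : C * C) : C * C := (Cplus (fst u) (fst w), Cplus (snd u) (snd w)).

Lemma vn2_tri u w : sqrt (vn2 (vadd u w)) <= sqrt (vn2 u) + sqrt (vn2 w).
Proof.
  destruct u as [[x1 x2] [x3 x4]], w as [[y1 y2] [y3 y4]].
  unfold vn2, c2, vadd; simpl.
  pose proof (tri4 x1 x2 x3 x4 y1 y2 y3 y4) as T.
  eapply Rle_trans; [|eapply Rle_trans; [exact T|]]; right; [f_equal; ring | f_equal; f_equal; ring].
Qed.

Lemma app_sub A B v : M2app A v = vadd (M2app B v) (M2app (M2sub A B) v).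
Proof.
  destruct A as [[a1 a2] [b1 b2] [c1 c2'] [d1 d2]], B as [[e1 e2] [f1 f2] [g1 g2] [h1 h2]],
    v as [[p1 p2] [q1 q2]].
  unfold vadd, M2app, M2sub, Cminus, Cplus, Cmult, Copp; simpl.
  f_equal; f_equal; ring.
Qed.

Lemma vnorm_split A B v :
  vnorm (M2app A v) <= vnorm (M2app B v) + vnorm (M2app (M2sub A B) v).
Proof.
  rewrite !vnorm_vn2, (app_sub A B v). apply vn2_tri.
Qed.

Lemma lub_facts (E : R -> Prop) x0 c :
  E x0 -> (forall x, E x -> x <= c) ->
  (forall x, E x -> x <= real (Lub_Rbar E)) /\
  (forall c', (forall x, E x -> x <= c') -> real (Lub_Rbar E) <= c').
Proof.
  intros H0 Hc. destruct (Lub_Rbar_correct E) as [ub lub].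
  destruct (Lub_Rbar E) as [r| |] eqn:Hl.
  - split.
    + intros x Hx. exact (ub x Hx).
    + intros c' Hc'. apply (lub (Finite c')). intros x Hx. exact (Hc' x Hx).
  - exfalso. apply (lub (Finite c)). intros x Hx. exact (Hc x Hx).
  - exfalso. exact (ub x0 H0).
Qed.

Lemma vnorm_1 u : vnorm u = 1 -> vn2 u = 1.
Proof.
  rewrite vnorm_vn2. intro H. rewrite <- (sqrt_sqrt (vn2 u)) by apply vn2_ge0.
  rewrite H. ring.
Qed.

Definition u0 : C * C := (RtoC 1, RtoC 0).
Lemma u0_unit : vnorm u0 = 1.
Proof. rewrite vnorm_vn2. unfold vn2, c2, u0, RtoC; simpl. replace (1*1+0*0+(0*0+0*0)) with 1 by ring. apply sqrt_1. Qed.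

Lemma app_unit_bound A u : vnorm u = 1 -> vnorm (M2app A u) <= sqrt (2 * fr2 A).
Proof.
  intro H. rewrite vnorm_vn2. apply sqrt_le_1_alt. apply app_bound. apply vnorm_1; exact H.
Qed.

Lemma opnorm_facts A :
  (forall u, vnorm u = 1 -> vnorm (M2app A u) <= opnorm A) /\
  (forall c, (forall u, vnorm u = 1 -> vnorm (M2app A u) <= c) -> opnorm A <= c).
Proof.
  destruct (lub_facts (fun r => exists v, vnorm v = 1 /\ r = vnorm (M2app A v))
     (vnorm (M2app A u0)) (sqrt (2 * fr2 A))) as [H1 H2].
  - exists u0. split; [apply u0_unit|reflexivity].
  - intros x [v [Hv ->]]. apply app_unit_bound; exact Hv.
  - unfold opnorm. split.
    + intros u Hu. apply H1. exists u. split; [exact Hu|reflexivity].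
    + intros c Hc. apply H2. intros x [v [Hv ->]]. apply Hc; exact Hv.
Qed.

Lemma opnorm_lip A B : opnorm A <= opnorm B + sqrt (2 * fr2 (M2sub A B)).
Proof.
  apply (proj2 (opnorm_facts A)). intros u Hu.
  eapply Rle_trans; [apply (vnorm_split A B u)|].
  apply Rplus_le_compat; [apply (proj1 (opnorm_facts B)); exact Hu|].
  apply app_unit_bound; exact Hu.
Qed.

Lemma fr2_sub_sym A B : fr2 (M2sub A B) = fr2 (M2sub B A).
Proof.
  destruct A as [[a1 a2] [b1 b2] [c1 c2'] [d1 d2]], B as [[e1 e2] [f1 f2] [g1 g2] [h1 h2]].
  unfold fr2, c2, M2sub, Cminus, Cplus, Copp; simpl. ring.
Qed.

Lemma opnorm_dist A B : Rabs (opnorm A - opnorm B) <= sqrt (2 * fr2 (M2sub A B)).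
Proof.
  pose proof (opnorm_lip A B). pose proof (opnorm_lip B A).
  rewrite fr2_sub_sym in H0. apply Rabs_le. lra.
Qed.


Lemma cR_plus (f g : R -> R) x : continuous f x -> continuous g x -> continuous (fun y => f y + g y) x.
Proof. intros; exact (continuous_plus f g x H H0). Qed.
Lemma cR_mult (f g : R -> R) x : continuous f x -> continuous g x -> continuous (fun y => f y * g y) x.
Proof. intros; exact (continuous_mult f g x H H0). Qed.
Lemma cR_minus (f g : R -> R) x : continuous f x -> continuous g x -> continuous (fun y => f y - g y) x.
Proof. intros; exact (continuous_minus f g x H H0). Qed.
Lemma cR_opp (f : R -> R) x : continuous f x -> continuous (fun y => - f y) x.
Proof. intros; exact (continuous_opp f x H). Qed.

Definition CC (f : R -> C) x := continuous (fun y => fst (f y)) x /\ continuous (fun y => snd (f y)) x.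

Lemma CC_plus f g x : CC f x -> CC g x -> CC (fun y => Cplus (f y) (g y)) x.
Proof. intros [] []; split; simpl; apply cR_plus; auto. Qed.
Lemma CC_mult f g x : CC f x -> CC g x -> CC (fun y => Cmult (f y) (g y)) x.
Proof. intros [] []; split; simpl; [apply cR_minus|apply cR_plus]; apply cR_mult; auto. Qed.
Lemma CC_minus f g x : CC f x -> CC g x -> CC (fun y => Cminus (f y) (g y)) x.
Proof. intros [] []; split; simpl; apply cR_plus; auto; apply cR_opp; auto. Qed.
Lemma CC_const c x : CC (fun _ => c) x.
Proof. split; apply continuous_const. Qed.

Lemma CC_of (v : R -> C) x : continuous v x -> CC v x.
Proof.
  intro H. split.
  - apply (continuous_comp v fst). exact H. destruct (v x); apply continuous_fst.
  - apply (continuous_comp v snd). exact H. destruct (v x); apply continuous_snd.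
Qed.

Lemma CC_shift (v : R -> C) c x : (forall y, continuous v y) -> CC (fun y => v (y + c)) x.
Proof.
  intro H. apply CC_of.
  apply (continuous_comp (fun y => y + c) v). apply cR_plus. apply continuous_id. apply continuous_const.
  apply H.
Qed.

Lemma cR_c2 f x : CC f x -> continuous (fun y => c2 (f y)) x.
Proof. intros []; unfold c2; apply cR_plus; apply cR_mult; auto. Qed.

Definition MC (M : R -> M2) x :=
  CC (fun y => m11 (M y)) x /\ CC (fun y => m12 (M y)) x /\
  CC (fun y => m21 (M y)) x /\ CC (fun y => m22 (M y)) x.

Lemma MC_mul A B x : MC A x -> MC B x -> MC (fun y => M2mul (A y) (B y)) x.
Proof.
  intros (a1&a2&a3&a4) (b1&b2&b3&b4). unfold MC, M2mul; simpl.
  repeat split; apply CC_plus; apply CC_mult; auto.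
Qed.

Lemma MC_cocycle alpha v n x : (forall y, continuous v y) -> MC (cocycle alpha (Smat v) n) x.
Proof.
  intro Hv. induction n as [|n IH]; simpl.
  - unfold MC, M2id; simpl. repeat split; apply CC_const.
  - apply (MC_mul (fun y => Smat v (y + INR n * alpha)) (cocycle alpha (Smat v) n)); [|exact IH].
    unfold MC, Smat; simpl. repeat split; try apply CC_const; apply CC_shift; exact Hv.
Qed.

Lemma opnorm_cont M x : MC M x -> continuous (fun y => opnorm (M y)) x.
Proof.
  intros (a1&a2&a3&a4).
  set (g := fun y => sqrt (2 * fr2 (M2sub (M y) (M x)))).
  assert (Hg : continuous g x).
  { unfold g. apply continuous_sqrt_comp. apply cR_mult. apply continuous_const.
    unfold fr2, M2sub; cbn [m11 m12 m21 m22]. apply cR_plus; [apply cR_plus; [apply cR_plus|]|]; apply cR_c2; apply CC_minus; auto; apply CC_const. }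
  assert (Hg0 : g x = 0).
  { unfold g. replace (fr2 (M2sub (M x) (M x))) with 0. rewrite Rmult_0_r. apply sqrt_0.
    destruct (M x) as [[a b] [c d] [e f] [h i]]. unfold fr2, c2, M2sub, Cminus, Cplus, Copp; simpl. ring. }
  apply filterlim_locally. intro eps.
  pose proof (proj1 (filterlim_locally g (g x)) Hg eps) as Hl.
  eapply filter_imp; [|exact Hl]. intros y Hy. simpl in *.
  unfold ball in *; simpl in *; unfold AbsRing_ball, abs, minus, plus, opp in *; simpl in *.
  rewrite Hg0 in Hy. pose proof (opnorm_dist (M y) (M x)).
  fold (g y) in H. replace (g y + - 0) with (g y) in Hy by ring.
  eapply Rle_lt_trans; [|exact Hy]. eapply Rle_trans; [exact H|]. apply Rle_abs.
Qed.


Definition J (w : C * C) : R := snd (fst w) * fst (snd w) - fst (fst w) * snd (snd w).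
Definition Sm (b : C) : M2 := mkM2 b (RtoC (-1)) (RtoC 1) (RtoC 0).

Lemma step1 b w : J (M2app (Sm b) w) = J w + snd b * c2 (fst w).
Proof. destruct b as [b1 b2], w as [[p1 p2] [q1 q2]]; unfold J, c2, Sm, M2app, RtoC; simpl; ring. Qed.

Lemma step2 b w : J (M2app (Sm b) w) * J (M2app (Sm b) w) <= c2 (fst w) * c2 (fst (M2app (Sm b) w)).
Proof.
  destruct b as [b1 b2], w as [[p1 p2] [q1 q2]]; unfold J, c2, Sm, M2app, RtoC; simpl.
  set (P1 := b1 * p1 - b2 * p2 + (-1 * q1 - 0 * q2)).
  set (P2 := b1 * p2 + b2 * p1 + (-1 * q2 + 0 * q1)).
  replace ((1 * p2 + 0 * p1 + (0 * q2 + 0 * q1))) with p2 by ring.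
  replace ((1 * p1 - 0 * p2 + (0 * q1 - 0 * q2))) with p1 by ring.
  assert (0 <= (P1*p1 + P2*p2)*(P1*p1 + P2*p2)) by apply Rle_0_sqr.
  match goal with |- ?L <= ?R => replace R with (L + (P1*p1 + P2*p2)*(P1*p1 + P2*p2)) by ring end.
  lra.
Qed.

Lemma amgm a b j : 0 <= a -> 0 <= b -> j * j <= a * b -> 2 * j <= a + b.
Proof.
  intros Ha Hb Hj. destruct (Rle_or_lt (2*j) (a+b)) as [|H]; [assumption|].
  exfalso. assert (0 <= (a-b)*(a-b)) by apply Rle_0_sqr.
  assert ((a+b)*(a+b) < (2*j)*(2*j)).
  { apply Rmult_le_0_lt_compat; lra. }
  nra.
Qed.

Lemma mono b w eps : eps <= snd b -> 0 < eps -> J w <= J (M2app (Sm b) w).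
Proof. intros. rewrite step1. pose proof (c2_ge0 (fst w)). nra. Qed.

Lemma two_step b1 b2 w eps : 0 < eps -> eps <= snd b1 -> eps <= snd b2 -> 0 <= J w ->
  (1 + 2 * eps) * J w <= J (M2app (Sm b2) (M2app (Sm b1) w)).
Proof.
  intros He H1 H2 H0. rewrite step1.
  pose proof (step2 b1 w) as K. pose proof (step1 b1 w) as K1.
  set (w1 := M2app (Sm b1) w) in *.
  pose proof (c2_ge0 (fst w)). pose proof (c2_ge0 (fst w1)).
  pose proof (amgm _ _ _ H H3 K).
  assert (J w <= J w1) by (rewrite K1; nra).
  assert (eps * c2 (fst w) <= snd b1 * c2 (fst w)) by nra.
  assert (eps * c2 (fst w1) <= snd b2 * c2 (fst w1)) by nra.
  nra.
Qed.

Lemma app_mul A B w : M2app (M2mul A B) w = M2app A (M2app B w).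
Proof.
  destruct A as [[a1 a2] [b1 b2] [c1 c2'] [d1 d2]], B as [[e1 e2] [f1 f2] [g1 g2] [h1 h2]],
    w as [[p1 p2] [q1 q2]].
  unfold M2app, M2mul, Cplus, Cmult; simpl. f_equal; f_equal; ring.
Qed.

Definition s0 := / sqrt 2.
Definition w0 : C * C := ((0, s0), (s0, 0)).

Lemma s0_sq : s0 * s0 = / 2.
Proof. unfold s0. rewrite <- Rinv_mult. rewrite sqrt_sqrt; lra. Qed.

Lemma w0_unit : vnorm w0 = 1.
Proof. rewrite vnorm_vn2. unfold vn2, c2, w0; simpl. replace (0*0 + s0*s0 + (s0*s0+0*0)) with 1.
  apply sqrt_1. rewrite s0_sq. field. Qed.

Lemma J_w0 : J w0 = / 2.
Proof. unfold J, w0; simpl. rewrite <- s0_sq. ring. Qed.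

Lemma vn2_J w : 2 * J w <= vn2 w.
Proof.
  destruct w as [[p1 p2] [q1 q2]]. unfold vn2, J, c2; simpl.
  assert (0 <= (p2-q1)*(p2-q1)) by apply Rle_0_sqr.
  assert (0 <= (p1+q2)*(p1+q2)) by apply Rle_0_sqr. nra.
Qed.

Definition W alpha v x k := M2app (cocycle alpha (Smat v) k x) w0.

Lemma W_S (alpha : R) (v : R -> C) (x : R) k : W alpha v x (S k) = M2app (Sm (v (x + INR k * alpha))) (W alpha v x k).
Proof. unfold W. simpl. rewrite app_mul. reflexivity. Qed.

Lemma W_mono (alpha : R) (v : R -> C) (eps x : R) (Heps : 0 < eps) (Hv : forall y, eps <= snd (v y)) k : J (W alpha v x k) <= J (W alpha v x (S k)).
Proof. rewrite W_S. apply (mono _ _ eps); auto. Qed.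

Lemma W_pos (alpha : R) (v : R -> C) (eps x : R) (Heps : 0 < eps) (Hv : forall y, eps <= snd (v y)) k : / 2 <= J (W alpha v x k).
Proof.
  induction k as [|k IH].
  - unfold W; simpl. replace (M2app M2id w0) with w0. rewrite J_w0; lra.
    unfold M2app, M2id, w0, RtoC, Cplus, Cmult; simpl. f_equal; f_equal; ring.
  - pose proof (W_mono alpha v eps x Heps Hv k). lra.
Qed.

Lemma W_two (alpha : R) (v : R -> C) (eps x : R) (Heps : 0 < eps) (Hv : forall y, eps <= snd (v y)) k : (1 + 2 * eps) * J (W alpha v x k) <= J (W alpha v x (S (S k))).
Proof.
  rewrite W_S, W_S. apply two_step; auto. pose proof (W_pos alpha v eps x Heps Hv k); lra.
Qed.

Lemma W_G (alpha : R) (v : R -> C) (eps x : R) (Heps : 0 < eps) (Hv : forall y, eps <= snd (v y)) k : (1 + 2 * eps) ^ k / 4 <= J (W alpha v x k) * J (W alpha v x (S k)).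
Proof.
  induction k as [|k IH].
  - simpl. pose proof (W_pos alpha v eps x Heps Hv 0). pose proof (W_mono alpha v eps x Heps Hv 0). nra.
  - simpl. pose proof (W_two alpha v eps x Heps Hv k). pose proof (W_pos alpha v eps x Heps Hv k). pose proof (W_pos alpha v eps x Heps Hv (S k)).
    assert ((1 + 2 * eps) * (J (W alpha v x k) * J (W alpha v x (S k))) <= J (W alpha v x (S k)) * J (W alpha v x (S (S k)))) by nra.
    assert (0 <= 1 + 2*eps) by lra.
    nra.
Qed.

Lemma W_final (alpha : R) (v : R -> C) (eps x : R) (Heps : 0 < eps) (Hv : forall y, eps <= snd (v y)) n : (1 + 2 * eps) ^ n <= vn2 (W alpha v x (S n)) * vn2 (W alpha v x (S n)).
Proof.
  pose proof (W_G alpha v eps x Heps Hv n). pose proof (W_mono alpha v eps x Heps Hv n). pose proof (W_pos alpha v eps x Heps Hv n).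
  pose proof (vn2_J (W alpha v x (S n))).
  nra.
Qed.

Lemma opnorm_lower (alpha : R) (v : R -> C) (eps x : R) (Heps : 0 < eps) (Hv : forall y, eps <= snd (v y)) n : INR n * ln (1 + 2 * eps) / 4 <= ln (opnorm (cocycle alpha (Smat v) (S n) x))
  /\ 1 <= opnorm (cocycle alpha (Smat v) (S n) x).
Proof.
  set (o := opnorm (cocycle alpha (Smat v) (S n) x)).
  assert (Ho : sqrt (vn2 (W alpha v x (S n))) <= o).
  { rewrite <- vnorm_vn2. apply (proj1 (opnorm_facts _)). apply w0_unit. }
  pose proof (W_final alpha v eps x Heps Hv n).
  pose proof (vn2_J (W alpha v x (S n))). pose proof (W_pos alpha v eps x Heps Hv (S n)).
  set (q := vn2 (W alpha v x (S n))) in *.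
  assert (Hq : sqrt q * sqrt q = q) by (apply sqrt_sqrt; lra).
  assert (1 <= sqrt q) by (rewrite <- sqrt_1; apply sqrt_le_1_alt; lra).
  split; [|lra].
  assert (Hp : 0 < 1 + 2 * eps) by lra.
  assert (H4 : (1 + 2 * eps) ^ n <= o ^ 4).
  { assert (q <= o * o) by nra. simpl. nra. }
  rewrite <- ln_pow in * by assumption.
  apply Rle_trans with (ln (o ^ 4) / 4).
  - apply Rmult_le_compat_r; [lra|]. apply ln_le; [apply pow_lt; lra| exact H4].
  - rewrite ln_pow by lra. simpl. lra.
Qed.



Lemma inv_lim : is_lim_seq (fun n => / INR (S n)) 0.
Proof.
  assert (H : is_lim_seq (fun n => INR (S n)) p_infty).
  { apply (is_lim_seq_incr_1 INR p_infty). apply is_lim_seq_INR. }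
  pose proof (is_lim_seq_inv _ _ H) as H'. simpl in H'. apply H'. discriminate.
Qed.

Lemma lim_q q : Lim_seq (fun n => q - q * / INR (S n)) = q.
Proof.
  apply is_lim_seq_unique.
  replace (Finite q) with (Finite (q - q * 0)) by (f_equal; ring).
  apply is_lim_seq_minus'. apply is_lim_seq_const.
  pose proof (is_lim_seq_scal_l _ q _ inv_lim) as H. simpl in H. exact H.
Qed.

Lemma ln_lower x : 0 < x -> x / (1 + x) <= ln (1 + x).
Proof.
  intro Hx. pose proof (exp_ineq1_le (ln (/ (1 + x)))).
  rewrite exp_ln in H by (apply Rinv_0_lt_compat; lra).
  rewrite ln_Rinv in H by lra.
  assert (/ (1 + x) = 1 - x / (1 + x)) by (field; lra). lra.
Qed.

Theorem lemma5p6 :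
  forall l : R, 0 < l ->
  exists Cl : R, 0 < Cl /\
  forall (alpha : R) (v : R -> C) (eps : R),
    irrational alpha ->
    (forall x, continuous v x) ->
    (forall x, v (x + 1) = v x) ->
    0 < eps -> eps <= l ->
    (forall x, Rabs (Re (v x)) <= l /\ eps <= Im (v x) <= l) ->
    Rbar_le (Finite (Cl * eps)) (lyapunov alpha (Smat v)).
Proof.
  intros l Hl. exists (/ (2 * (1 + 2 * l))). split.
  { apply Rinv_0_lt_compat; lra. }
  intros alpha v eps _ Hc _ He Hel Hb.
  assert (Hv : forall y, eps <= snd (v y)) by (intro y; apply (Hb y)).
  set (q := ln (1 + 2 * eps) / 4).
  apply Rbar_le_trans with (Lim_seq (fun n => q - q * / INR (S n))).
  { rewrite lim_q. simpl. unfold q.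
    pose proof (ln_lower (2 * eps) ltac:(lra)).
    apply Rle_trans with (eps * / (2 * (1 + 2 * eps))).
    - rewrite Rmult_comm. apply Rmult_le_compat_l; [lra|]. apply Rinv_le_contravar; lra.
    - replace (eps * / (2 * (1 + 2 * eps))) with (2 * eps / (1 + 2 * eps) / 4) by (field; lra). lra. }
  unfold lyapunov. apply Lim_seq_le_loc. exists 0%nat. intros n _.
  set (g := fun x => ln (opnorm (cocycle alpha (Smat v) (S n) x))).
  assert (Hg : RInt (fun _ => INR n * q) 0 1 <= RInt g 0 1).
  { apply RInt_le; [lra| apply ex_RInt_const| |].
    - apply (ex_RInt_continuous (V:=R_CompleteNormedModule)). intros z _. unfold g.
      apply (continuous_comp (fun x => opnorm (cocycle alpha (Smat v) (S n) x)) ln).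
      + apply opnorm_cont. apply MC_cocycle. exact Hc.
      + apply continuous_ln. pose proof (opnorm_lower alpha v eps z He Hv n). lra.
    - intros x _. unfold g, q. pose proof (opnorm_lower alpha v eps x He Hv n). lra. }
  rewrite RInt_const in Hg. unfold scal in Hg; simpl in Hg; unfold mult in Hg; simpl in Hg.
  fold g.
  assert (HS : INR (S n) = INR n + 1) by (rewrite S_INR; reflexivity).
  assert (0 < INR (S n)) by (apply lt_0_INR; lia).
  apply Rle_trans with (/ INR (S n) * (INR n * q)).
  - right. rewrite HS. field. rewrite <- HS. lra.
  - apply Rmult_le_compat_l; [left; apply Rinv_0_lt_compat; lra|]. lra.
Qed.
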